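(* Let $E$ be a fixed-point equation system whose interpretation restricts to a map $[\![E]\!]_{\le 1}\colon\mathbb{E}_{\le 1}(D)\to\mathbb{E}_{\le 1}(D)$. Then for every $d\in D$ and every $\epsilon>0$ there exists $\eta'\in\mathbb{E}(D)$ with $\mu[\![E]\!]_{\le 1}(d)-\epsilon<\eta'(d)\le\mu[\![E]\!]_{\le 1}(d)$ such that there exist: a fixed-point equation system $E'$ over the same predicate variables with $[\![E']\!]\le[\![E]\!]$; $u\in\mathbb{E}(D)$ with $[\![E']\!](u)\le u$; a function $r\colon D\to[0,\infty)$ with $(\mathsf{D}[\![E']\!])(r)+u\le r$; and such that $\eta'\le u$ and $\eta'\le[\![E']\!](\eta')$.
   Context: $\mathbb{E}(D)$ is the set of functions $D\to[0,\infty]$ with pointwise order and operations ($\infty+x=\infty$, $0\cdot\infty=0$, $r\cdot\infty=\infty$ for $r>0$); $\mathbb{E}_{\le 1}(D)$ is the subset of functions $D\to[0,1]$; for $x\ge y$ in $[0,\infty]$, $x-y$ is the least $z$ with $x=y+z$; $\mathbb{O}$ is the zero function; $(\mathsf{D}K)(\eta)=K(\eta)-K(\mathbb{O})$; $\mu$ denotes least fixed point. Quantitative formulas over predicate variables $X_1,\dots,X_n$ ($X_j$ of type $D_j\to\Omega$): $F ::= X_j(\tilde e)\mid t\mid F_1+F_2\mid t\cdot F\mid \mathbf{if}\ \varphi\ \mathbf{then}\ F_1\ \mathbf{else}\ F_2$ with $\tilde e$ expressions, $t$ a $[0,\infty)$-valued term, $\varphi$ boolean; interpreted by $[\![X_j(e)]\!](\eta)(v)=\eta_j([\![e]\!](v))$,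 $[\![t]\!](\eta)(v)=[\![t]\!](v)$, pointwise sum and scalar product, case distinction for conditionals. A fixed-point equation system $E=\{X_i(\tilde x_i)=_\mu F_i\}_{i=1}^n$ has interpretation $[\![E]\!](\eta)=([\![F_1]\!](\eta),\dots,[\![F_n]\!](\eta))$ on $\mathbb{E}(D)$, $D=\coprod_j D_j$. (The existence of the data $E',u,r$ with the stated conditions is what the paper calls provability of $\eta'\le\mu[\![E]\!]$ by its proof rule.) *)

(* Defs.v *)
(* values in [0,+oo] are extended reals \bar R
   (with nonnegativity imposed explicitly), R : realType. *)
From mathcomp Require Import all_boot all_order all_algebra.
From mathcomp Require Import reals constructive_ereal.
Set Implicit Arguments. Unset Strict Implicit. Unset Printing Implicit Defensive.
Import Order.TTheory GRing.Theory Num.Theory.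
Local Open Scope ring_scope.
Local Open Scope ereal_scope.

Section QFormulas.
Variables (R : realType) (n : nat) (D : 'I_n -> Type).

Definition dom := {j : 'I_n & D j}.

(* Quantitative formulas over predicate variables X_1..X_n (X_j : D_j -> Omega),
   whose free (argument) variables range over V.  Expressions, terms and
   boolean conditions are taken semantically (functions of the valuation v). *)
Inductive qform (V : Type) : Type :=
| QVar (j : 'I_n) (e : V -> D j)
| QConst (t : V -> R) of (forall v, (0 <= t v)%R)
| QAdd of qform V & qform V
| QScale (t : V -> R) of (forall v, (0 <= t v)%R) & qform V
| QIf of (V -> bool) & qform V & qform V.

Fixpoint qsem (V : Type) (F : qform V) (eta : dom -> \bar R) (v : V) : \bar R :=
  match F with
  | QVar j e => eta (existT _ j (e v))
  | QConst t _ => (t v)%:E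
  | QAdd F1 F2 => qsem F1 eta v + qsem F2 eta v
  | QScale t _ F1 => (t v)%:E * qsem F1 eta v
  | QIf phi F1 F2 => if phi v then qsem F1 eta v else qsem F2 eta v
  end.

Definition eqsys := forall i : 'I_n, qform (D i).

Definition semE (E : eqsys) (eta : dom -> \bar R) : dom -> \bar R :=
  fun d => let (i, x) := d in qsem (E i) eta x.

Definition isE (eta : dom -> \bar R) : Prop := forall d, 0 <= eta d.
Definition isE1 (eta : dom -> \bar R) : Prop := forall d, 0 <= eta d <= 1.

Definition fle (f g : dom -> \bar R) : Prop := forall d, f d <= g d.

Definition ozero : dom -> \bar R := fun _ => 0.

(* truncated difference on [0,+oo]: for x >= y, the least z with x = y + z *)
Definition edminus (x y : \bar R) : \bar R := if y == +oo then 0 else x - y.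

Definition Dop (K : (dom -> \bar R) -> (dom -> \bar R)) (eta : dom -> \bar R)
  : dom -> \bar R := fun d => edminus (K eta d) (K ozero d).

Definition is_lfp_le1 (E : eqsys) (m : dom -> \bar R) : Prop :=
  [/\ isE1 m, semE E m = m &
      forall x, isE1 x -> semE E x = x -> fle m x].

End QFormulas.

(* Main.v *)
Require Import Defs.
From mathcomp Require Import all_boot all_order all_algebra.
From mathcomp Require Import reals constructive_ereal.
From mathcomp Require Import classical_sets ereal.
From mathcomp Require Import lra.
Import Order.TTheory GRing.Theory Num.Theory.
Local Open Scope ring_scope.
Local Open Scope ereal_scope.

Section Aux.
Variables (R : realType) (n : nat) (D : 'I_n -> Type).
Implicit Types (eta : dom D -> \bar R).

Lemma qsem_ge0 V (F : qform R D V) eta v : isE eta -> 0 <= qsem F eta v.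
Proof.
move=> he; elim: F v => [j e|t ht|F1 IH1 F2 IH2|t ht F IH|phi F1 IH1 F2 IH2] v /=.
- exact: he.
- by rewrite lee_fin.
- by rewrite adde_ge0.
- by rewrite mule_ge0 ?lee_fin.
- by case: (phi v).
Qed.

Lemma qsem_mono V (F : qform R D V) eta1 eta2 v : isE eta1 -> fle eta1 eta2 ->
  qsem F eta1 v <= qsem F eta2 v.
Proof.
move=> he h12; elim: F v => [j e|t ht|F1 IH1 F2 IH2|t ht F IH|phi F1 IH1 F2 IH2] v /=.
- exact: h12.
- by [].
- by rewrite leeD.
- by rewrite lee_wpmul2l ?lee_fin.
- by case: (phi v).
Qed.

Lemma qsem_scale V (F : qform R D V) eta (l : R) v : isE eta -> (0 <= l <= 1)%R ->
  l%:E * qsem F eta v <= qsem F (fun y => l%:E * eta y) v.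
Proof.
move=> he /andP[l0 l1]; elim: F v => [j e|t ht|F1 IH1 F2 IH2|t ht F IH|phi F1 IH1 F2 IH2] v /=.
- by [].
- by rewrite -EFinM lee_fin ler_piMl.
- rewrite ge0_muleDr ?qsem_ge0 //; exact: leeD.
- by rewrite muleCA lee_wpmul2l ?lee_fin.
- by case: (phi v).
Qed.

Lemma qsem_cont V (F : qform R D V) (f : nat -> dom D -> \bar R) s v :
  (forall k, isE (f k)) -> (forall k, fle (f k) (f k.+1)) ->
  (forall y e, (0 < e)%R -> exists k, s y <= f k y + e%:E) ->
  forall e, (0 < e)%R -> exists k, qsem F s v <= qsem F (f k) v + e%:E.
Proof.
move=> hf0 hinc hs.
have mon : forall k k', (k <= k')%N -> fle (f k) (f k').
  move=> k k'; elim: k' => [|k' IH]; first by rewrite leqn0 => /eqP -> y.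
  rewrite leq_eqVlt => /orP[/eqP -> y //|/IH h y].
  exact: le_trans (h y) (hinc k' y).
have qm : forall W (G : qform R D W) w k k', (k <= k')%N -> qsem G (f k) w <= qsem G (f k') w.
  by move=> W G w k k' kk; apply: qsem_mono => //; apply: mon.
elim: F v => [j e|t ht|F1 IH1 F2 IH2|t ht F IH|phi F1 IH1 F2 IH2] v eps he /=.
- exact: hs.
- by exists 0%N; rewrite leeDl // lee_fin ltW.
- have [k1 h1] := IH1 v (eps / 2)%R ltac:(by rewrite divr_gt0).
  have [k2 h2] := IH2 v (eps / 2)%R ltac:(by rewrite divr_gt0).
  exists (maxn k1 k2).
  apply: le_trans (leeD h1 h2) _.
  rewrite addeACA -EFinD -splitr.
  by apply: leeD => //; apply: leeD; apply: qm; rewrite ?leq_maxl ?leq_maxr.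
- have tp : (0 < t v + 1)%R by rewrite ltr_wpDl.
  have [k h] := IH v (eps / (t v + 1))%R ltac:(by rewrite divr_gt0).
  exists k.
  apply: le_trans (lee_wpmul2l _ h) _; first by rewrite lee_fin.
  rewrite ge0_muleDr ?qsem_ge0 ?lee_fin ?divr_ge0 //; try exact: ltW.
  apply: leeD => //; rewrite -EFinM lee_fin mulrA ler_pdivrMr //.
  have := ht v; nra.
- case: (phi v).
  + exact: IH1 v eps he.
  + exact: IH2 v eps he.
Qed.

Lemma fin01 (z : \bar R) : 0 <= z <= 1 -> z = (fine z)%:E.
Proof. by case: z => [r| |] //= /andP[]. Qed.

Lemma bernoulli (x : R) k : (0 <= x <= 1)%R -> (1 - k%:R * x <= (1 - x) ^+ k)%R.
Proof.
move=> /andP[x0 x1]; elim: k => [|k IH]; first by rewrite mul0r subr0 expr0.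
rewrite exprS mulrSr.
have h1 : (0 <= 1 - x)%R by rewrite subr_ge0.
have h2 : (0 <= k%:R * x * x)%R by rewrite mulr_ge0 // mulr_ge0.
nra.
Qed.
End Aux.
Arguments fin01 {R z}.
Arguments bernoulli {R}.
Arguments qsem_cont {R n D V} F {f s} v.

Theorem theorem4p9 (R : realType) (n : nat) (D : 'I_n -> Type)
  (E : eqsys R D)
  (Hrestr : forall eta : dom D -> \bar R, isE1 eta -> isE1 (semE E eta))
  (m : dom D -> \bar R) (Hm : is_lfp_le1 E m) :
  forall (d : dom D) (eps : R), (0 < eps)%R ->
  exists eta' : dom D -> \bar R,
    [/\ isE eta', m d - eps%:E < eta' d, eta' d <= m d &
      exists (E' : eqsys R D) (u : dom D -> \bar R) (r : dom D -> R),
        (forall eta, isE eta -> fle (semE E' eta) (semE E eta)) /\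
        (isE u /\ fle (semE E' u) u) /\
        (forall x, (0 <= r x)%R) /\
        fle (fun x => Dop (semE E') (fun y => (r y)%:E) x + u x)
            (fun x => (r x)%:E) /\
        fle eta' u /\
        fle eta' (semE E' eta')].
Proof.
move=> d eps eps0; case: Hm => m1 mfix mleast.
pose G := semE E.
have Gge0 : forall eta, isE eta -> isE (G eta).
  by move=> eta he [i x]; apply: qsem_ge0.
have Gmono : forall e1 e2, isE e1 -> fle e1 e2 -> fle (G e1) (G e2).
  by move=> e1 e2 h h12 [i x]; apply: qsem_mono.
have Gscale : forall eta l, isE eta -> (0 <= l <= 1)%R -> forall y,
    l%:E * G eta y <= G (fun y => l%:E * eta y) y.
  by move=> eta l he hl [i x]; apply: qsem_scale.
have E1E : forall eta : dom D -> \bar R, isE1 eta -> isE eta by move=> eta h y; case/andP: (h y).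
have z1 : isE1 (ozero R (D:=D)) by move=> y; rewrite /ozero lexx lee01.
pose Gk k := iter k G (ozero R (D:=D)).
have GkE1 : forall k, isE1 (Gk k).
  by elim=> [|k IH] //=; apply: Hrestr.
have Gkinc : forall k, fle (Gk k) (Gk k.+1).
  elim=> [|k IH] y /=; first by apply: Gge0; apply: E1E.
  by apply: Gmono => //; apply: E1E.
have Gkm : forall k, fle (Gk k) m.
  elim=> [|k IH] y /=; first by case/andP: (m1 y).
  by rewrite -mfix; apply: Gmono => //; apply: E1E.
pose s (y : dom D) := ereal_sup (range (fun k => Gk k y)).
have sub : forall k y, Gk k y <= s y.
  by move=> k y; apply: ereal_sup_ubound; exists k.
have sm : fle s m by move=> y; apply: ge_ereal_sup => _ [k _ <-]; apply: Gkm.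
have sE1 : isE1 s.
  move=> y; apply/andP; split; first exact: (sub 0%N y).
  by apply: le_trans (sm y) _; case/andP: (m1 y).
have hs : forall y e, (0 < e)%R -> exists k, s y <= Gk k y + e%:E.
  move=> y e e0.
  have sf : s y \is a fin_num by rewrite (fin01 (sE1 y)).
  have : s y - e%:E < s y.
    by rewrite lteBlDr // (fin01 (sE1 y)) -EFinD lte_fin ltrDl.
  move/ereal_sup_gt => [_ [k _ <-]] hk; exists k.
  by move: hk; rewrite lteBlDr // => /ltW.
have sfix : G s = s.
  apply: boolp.funext => y; apply/eqP; rewrite eq_le; apply/andP; split.
  - apply/lee_addgt0Pr => e e0; case: y => i x.
    have [k hk] := qsem_cont (E i) x (fun k => E1E _ (GkE1 k)) Gkinc hs e e0.
    apply: le_trans hk _; apply: leeD => //.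
    exact: (sub k.+1 (existT _ i x)).
  - apply: ge_ereal_sup => _ [[|k] _ <-]; first by apply: Gge0; apply: E1E.
    by apply: Gmono; [apply: E1E | move=> z; apply: sub].
have ms : fle m s := mleast s sE1 sfix.
pose eps' := Num.min eps 1%R.
have eps'0 : (0 < eps')%R by rewrite lt_min eps0 ltr01.
have eps'1 : (eps' <= 1)%R by rewrite ge_min lexx orbT.
have eps'e : (eps' <= eps)%R by rewrite ge_min lexx.
have [N hN] := hs d (eps' / 2)%R ltac:(by rewrite divr_gt0).
pose x := (eps' / (2 * (N%:R + 1)))%R.
have Np : (0 < 2 * (N%:R + 1) :> R)%R by rewrite mulr_gt0 // ltr_wpDl.
have hx : (x * (2 * (N%:R + 1)) = eps')%R by rewrite /x divfK // gt_eqF.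
have x0 : (0 < x)%R by rewrite /x divr_gt0.
have N0 : (0 <= N%:R :> R)%R by [].  
have x12 : (x <= 1 / 2)%R by nra.
have Nx : (N%:R * x < eps' / 2)%R by nra.
pose c := (1 - x)%R.
have c0 : (0 <= c)%R by rewrite /c subr_ge0; nra.
have c1 : (c <= 1)%R by rewrite /c; lra.
have cN : (1 - N%:R * x <= c ^+ N)%R by apply: bernoulli; apply/andP; split; nra.
have bf : forall i (v : D i), (0 <= x * fine (qsem (E i) (ozero R (D:=D)) v))%R.
  move=> i v; apply: mulr_ge0; first exact: ltW.
  by apply: fine_ge0; apply: qsem_ge0; exact: E1E.
pose E' : eqsys R D := fun i => QAdd (QConst D (bf i)) (QScale (fun _ => c0) (E i)).
pose G' := semE E'.
pose b y := fine (G (ozero R (D:=D)) y).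
have bE : forall y, (b y)%:E = G (ozero R (D:=D)) y.
  by move=> y; rewrite /b -fin01 //; apply: Hrestr.
have b01 : forall y, (0 <= b y <= 1)%R.
  by move=> y; rewrite -!lee_fin bE; apply: Hrestr.
have G'E : forall eta y, G' eta y = (x * b y)%:E + c%:E * G eta y.
  by move=> eta [i v].
have G'ge0 : forall eta, isE eta -> isE (G' eta).
  by move=> eta he [i v]; apply: qsem_ge0.
have G'mono : forall e1 e2, isE e1 -> fle e1 e2 -> fle (G' e1) (G' e2).
  by move=> e1 e2 h h12 [i v]; apply: qsem_mono.
have xc : (x + c = 1)%R by rewrite /c; lra.
have cl1 : forall eta, isE eta -> fle (G' eta) (G eta).
  move=> eta he y; rewrite G'E.
  have h1 : (x * b y)%:E <= x%:E * G eta y.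
    rewrite EFinM bE; apply: lee_wpmul2l; first by rewrite lee_fin ltW.
    by apply: Gmono => // z; apply: he.
  apply: le_trans (leeD h1 (lexx _)) _.
  rewrite -ge0_muleDl; last 2 first.
  - by rewrite lee_fin ltW.
  - by rewrite lee_fin.
  by rewrite -EFinD xc mul1e.
pose u : dom D -> \bar R := fun _ => 1.
have uE1 : isE1 u by move=> y; rewrite /u lexx lee01.
have cl2 : fle (G' u) u.
  move=> y; rewrite G'E.
  have g01 : (0 <= G u y <= 1) := Hrestr u uE1 y.
  have gE : G u y = (fine (G u y))%:E := fin01 g01.
  move: g01; rewrite gE !lee_fin => /andP[g0 g1].
  idtac.
  have := b01 y; move=> /andP[b0 b1].
  have : (x * b y <= x)%R by rewrite ler_piMr // ltW.
  have : (c * fine (G u y) <= c)%R by rewrite ler_piMr.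
  lra.
pose a := (x^-1)%R.
have a0 : (0 <= a)%R by rewrite /a invr_ge0 ltW.
have xa : (x * a = 1)%R by rewrite /a mulfV // gt_eqF.
have G'0 : forall y, G' (ozero R (D:=D)) y = (b y)%:E.
  move=> y; rewrite G'E -bE -EFinM -EFinD; congr (_%:E).
  by rewrite -mulrDl xc mul1r.
have cl3 : forall y, Dop G' (fun _ => a%:E) y + u y <= a%:E.
  move=> y; rewrite /Dop /edminus G'0 /= G'E.
  have Gr0 : 0 <= G (fun _ => a%:E) y by apply: Gge0 => z; rewrite lee_fin.
  have Grle : x%:E * G (fun _ => a%:E) y <= 1.
    apply: le_trans (Gscale _ x _ _ y) _.
    - by move=> z; rewrite lee_fin.
    - by apply/andP; split; [exact: ltW | lra].
    have -> : (fun z : dom D => x%:E * a%:E) = u.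
      by apply: boolp.funext => z; rewrite -EFinM xa.
    by case/andP: (Hrestr u uE1 y).
  move: Gr0 Grle; case: (G (fun _ => a%:E) y) => [g| |] //; last first.
    by rewrite gt0_muley // lte_fin.
  rewrite !lee_fin => g0 g1.
  have b0 := b01 y.
  have ga : (g <= a)%R by rewrite -(ler_pM2l x0) xa.
  case/andP: b0 => b0 b1.
  rewrite /c; nra.
pose G'k k := iter k G' (ozero R (D:=D)).
have G'kE : forall k, isE (G'k k).
  elim=> [|k IH] y /=; first by [].
  exact: G'ge0.
have G'km : forall k, fle (G'k k) m.
  elim=> [|k IH] y /=; first by case/andP: (m1 y).
  apply: le_trans (cl1 _ (G'kE k) y) _.
  by rewrite -mfix; apply: Gmono.
have G'kinc : forall k, fle (G'k k) (G'k k.+1).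
  elim=> [|k IH] y /=; first by apply: G'ge0.
  by apply: G'mono.
have G'kGk : forall k y, (c ^+ k)%:E * Gk k y <= G'k k y.
  elim=> [|k IH] y /=; first by rewrite mule0.
  have ck : (0 <= c ^+ k <= 1)%R by rewrite exprn_ge0 // exprn_ile1.
  have hsc : isE (fun z => (c ^+ k)%:E * Gk k z).
    by move=> z; apply: mule_ge0; [rewrite lee_fin exprn_ge0 | case/andP: (GkE1 k z)].
  apply: le_trans (G'mono _ _ hsc IH y).
  rewrite G'E; apply: le_trans (leeDr _ _); last by rewrite lee_fin; apply: mulr_ge0; [exact: ltW | case/andP: (b01 y)].
  rewrite exprS EFinM -muleA; apply: lee_wpmul2l; first by rewrite lee_fin.
  by apply: Gscale => //; apply: E1E.
exists (G'k N); split.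
- exact: G'kE.
- apply: lt_le_trans (G'kGk N d).
  have sd := le_trans (ms d) hN.
  have g01 := GkE1 N d.
  have gE : Gk N d = (fine (Gk N d))%:E := fin01 g01.
  have mE : m d = (fine (m d))%:E := fin01 (m1 d).
  move: sd g01; rewrite gE mE -EFinD -EFinM -EFinB !lee_fin lte_fin => sd /andP[g0 g1].
  have h1 : (0 <= (c ^+ N - (1 - N%:R * x)) * fine (Gk N d))%R.
    by apply: mulr_ge0 => //; rewrite subr_ge0.
  have h2 : (0 <= N%:R * x * (1 - fine (Gk N d)))%R.
    by apply: mulr_ge0; [apply: mulr_ge0 => //; exact: ltW | rewrite subr_ge0].
  nra.
- exact: G'km.
exists E', u, (fun _ => a); split; first exact: cl1.
split; first by split => // y; rewrite /u lee01.
split; first by [].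
split; first exact: cl3.
split; last exact: G'kinc.
by move=> y; apply: le_trans (G'km N y) _; case/andP: (m1 y).
Qed.
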